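(* Let $\mathbf{f}$ be the Fibonacci sequence, fixed point of the substitution $0\mapsto01$, $1\mapsto0$. For each $k\ge2$, the smallest integer $C_k\ge1$ such that $\mathbf{f}$ is $(k,C_k)$-balanced is $C_k=2$.
   Context: For positive integers $k,C$, a sequence $\mathbf{x}$ over alphabet $A$ is $(k,C)$-balanced if for all factors $u,v$ of $\mathbf{x}$ with $|u|=|v|$ and every $w\in A^k$, $||u|_w-|v|_w|\le C$, where $|u|_w$ is the number of (possibly overlapping) occurrences of $w$ in $u$. *)

(* Defs.v *)
From mathcomp Require Import all_boot all_order all_algebra.
Set Implicit Arguments. Unset Strict Implicit. Unset Printing Implicit Defensive.

Definition fib_subst (a : nat) : seq nat := if a == 0 then [:: 0; 1] else [:: 0].
Definition fib_morph (s : seq nat) : seq nat := flatten (map fib_subst s).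

(* sigma^m(0); these are successive prefixes of the fixed point, and
   sigma^(n+1)(0) has length >= n+1, so the n-th letter of the fixed point
   is the n-th letter of sigma^(n+1)(0). *)
Definition fib_iter (m : nat) : seq nat := iter m fib_morph [:: 0].
Definition fib_word (n : nat) : nat := nth 0 (fib_iter n.+1) n.

Definition factor (x : nat -> nat) (i n : nat) : seq nat := mkseq (fun j => x (i + j)) n.

Definition occ (w u : seq nat) : nat :=
  count (fun p => take (size w) (drop p u) == w) (iota 0 (size u).+1).

Definition balanced (x : nat -> nat) (k C : nat) : Prop :=
  forall (i j n : nat) (w : seq nat), size w = k -> all (fun a => a < 2) w ->
    (`|occ w (factor x i n) - occ w (factor x j n)| <= C)%N.

(* Main.v *)
Require Import Defs.
From mathcomp Require Import all_boot all_order all_algebra.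
From mathcomp Require Import zify.

Notation f := fib_word.
Definition it m v := iter m fib_morph v.
Definition sm m j := size (it m (mkseq f j)).
Definition AA m := size (it m [:: 0]).
Definition BB m := size (it m [:: 1]).
Definition cnt0 i L := count (fun p => f p == 0) (iota i L).

Lemma morph_cat u v : fib_morph (u ++ v) = fib_morph u ++ fib_morph v.
Proof. by rewrite /fib_morph map_cat flatten_cat. Qed.

Lemma it_cat m u v : it m (u ++ v) = it m u ++ it m v.
Proof. elim: m => [//|m IH] /=. by rewrite /it /= -!/(it m _) IH morph_cat. Qed.

Lemma itS m v : it m.+1 v = it m (fib_morph v).
Proof. by rewrite /it iterSr. Qed.

Lemma itSo m v : it m.+1 v = fib_morph (it m v).
Proof. by []. Qed.

Lemma itD m n v : it m (it n v) = it (m + n) v.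
Proof. by rewrite /it iterD. Qed.

Lemma it_nil m : it m [::] = [::].
Proof. by elim: m => // m IH; rewrite itSo IH. Qed.

Lemma size_morph v : size (fib_morph v) = size v + count (pred1 0) v.
Proof.
elim: v => // a v IH. rewrite -cat1s morph_cat size_cat IH /=.
rewrite /fib_morph /= /fib_subst. by case: (a == 0) => /=; lia.
Qed.

Lemma fib_iterS N : exists r, fib_iter N.+1 = fib_iter N ++ r /\ 0 < size r.
Proof.
elim: N => [|N [r [E Hr]]]; first by exists [:: 1].
exists (fib_morph r); split.
  by rewrite /fib_iter iterS -/(fib_iter N.+1) E morph_cat -E.
rewrite size_morph; lia.
Qed.

Lemma fib_iter_pre N d : exists r, fib_iter (N + d) = fib_iter N ++ r.
Proof.
elim: d => [|d [r E]]; first by exists [::]; rewrite addn0 cats0.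
have [r' [E' _]] := fib_iterS (N + d).
exists (r ++ r'). by rewrite addnS E' E catA.
Qed.

Lemma size_fib_iter N : N < size (fib_iter N).
Proof.
elim: N => // N IH. have [r [E Hr]] := fib_iterS N.
rewrite E size_cat; lia.
Qed.

Lemma fib_iter_nth N n : n < size (fib_iter N) -> f n = nth 0 (fib_iter N) n.
Proof.
move=> Hn; rewrite /fib_word.
case: (leqP N n.+1) => H.
  have [r E] := fib_iter_pre N (n.+1 - N).
  by rewrite subnKC // in E; rewrite E nth_cat Hn.
have [r E] := fib_iter_pre n.+1 (N - n.+1).
rewrite subnKC in E; last by apply: ltnW.
by rewrite E nth_cat (ltnW (size_fib_iter _)).
Qed.

Lemma prefix_f s N r : fib_iter N = s ++ r -> s = mkseq f (size s).
Proof.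
move=> E. apply: (@eq_from_nth _ 0); first by rewrite size_mkseq.
move=> i Hi. rewrite nth_mkseq // (@fib_iter_nth N); last by rewrite E size_cat; lia.
by rewrite E nth_cat Hi.
Qed.

Lemma PL m j : mkseq f (sm m j) = it m (mkseq f j).
Proof.
have Hj : j <= size (fib_iter j) by apply: ltnW; apply: size_fib_iter.
have Ej : mkseq f j = take j (fib_iter j).
  have := @prefix_f (take j (fib_iter j)) j (drop j (fib_iter j)).
  by rewrite cat_take_drop size_take_min (minn_idPl Hj) => ->.
have E : fib_iter (m + j) = it m (take j (fib_iter j)) ++ it m (drop j (fib_iter j)).
  by rewrite -it_cat cat_take_drop /fib_iter -/(it _ _) /it iterD.
have := prefix_f _ _ _ E. rewrite /sm Ej. by move=> <-.
Qed.

Lemma mkseq_split (g : nat -> nat) j r :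
  mkseq g (j + r) = mkseq g j ++ mkseq (fun i => g (j + i)) r.
Proof.
rewrite /mkseq iotaD map_cat.
have -> : iota (0 + j) r = [seq j + i | i <- iota 0 r] by rewrite -iotaDl addn0 add0n.
by rewrite -map_comp.
Qed.

Lemma BF m j r : sm m (j + r) = sm m j + size (it m (mkseq (fun i => f (j + i)) r)).
Proof. by rewrite /sm mkseq_split it_cat size_cat. Qed.

Lemma BL m j r t : t < size (it m (mkseq (fun i => f (j + i)) r)) ->
  f (sm m j + t) = nth 0 (it m (mkseq (fun i => f (j + i)) r)) t.
Proof.
move=> Ht. have := PL m (j + r). rewrite mkseq_split it_cat => E.
have Hs : size (it m (mkseq f j)) = sm m j by [].
rewrite -(@nth_mkseq _ 0 f (sm m (j + r))); last by rewrite BF; lia.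
by rewrite PL mkseq_split it_cat nth_cat Hs ltnNge leq_addr /= addKn.
Qed.

Lemma all_lt2_morph v : all (fun a => a < 2) (fib_morph v).
Proof.
elim: v => // a v IH. rewrite -cat1s morph_cat all_cat IH andbT.
by rewrite /fib_morph /= /fib_subst; case: (a == 0).
Qed.

Lemma f_lt2 n : f n < 2.
Proof.
rewrite /fib_word.
have H : all (fun a => a < 2) (fib_iter n.+1).
  by rewrite /fib_iter iterS; apply: all_lt2_morph.
case: (ltnP n (size (fib_iter n.+1))) => Hn.
  by apply: (all_nthP 0 H).
by rewrite nth_default.
Qed.

Lemma f01 n : f n = 0 \/ f n = 1.
Proof. have := f_lt2 n; case: (f n) => [|[|n0]]; auto; by []. Qed.

Lemma f0 : f 0 = 0.
Proof. by vm_compute. Qed.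

Lemma AA0 : AA 0 = 1. Proof. by []. Qed.
Lemma BB0 : BB 0 = 1. Proof. by []. Qed.
Lemma AAS m : AA m.+1 = AA m + BB m.
Proof. by rewrite /AA itS /= /fib_morph /= -cat1s it_cat size_cat. Qed.
Lemma BBS m : BB m.+1 = AA m.
Proof. by rewrite /BB itS. Qed.

Lemma AA_pos m : 0 < AA m.
Proof. elim: m => // m IH; rewrite AAS; lia. Qed.
Lemma BB_pos m : 0 < BB m.
Proof. case: m => // m; rewrite BBS; apply: AA_pos. Qed.
Lemma BB_le_AA m : BB m <= AA m.
Proof. case: m => // m; rewrite AAS BBS; lia. Qed.
Lemma AA_le m : AA m <= 2 * BB m.
Proof. case: m => // m; rewrite AAS BBS; have := BB_le_AA m; lia. Qed.

Lemma size_it1 m a : size (it m [:: a]) = if a == 0 then AA m else BB m.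
Proof.
case: eqP => [->//|/eqP Ha]. case: m => [//|m].
rewrite /BB !itS /fib_morph /= /fib_subst (negbTE Ha) //.
Qed.

Lemma size_it m v : size (it m v) =
  count (pred1 0) v * AA m + (size v - count (pred1 0) v) * BB m.
Proof.
elim: v => [|a v IH]; first by rewrite it_nil.
rewrite -cat1s it_cat size_cat IH size_it1 /=.
have := count_size (pred1 0) v.
case: eqP => _ /=; nia.
Qed.

Lemma sm0 m : sm m 0 = 0.
Proof. by rewrite /sm /= it_nil. Qed.

Lemma smS m j : sm m j.+1 = sm m j + size (it m [:: f j]).
Proof. by rewrite -addn1 BF /mkseq /= addn0. Qed.

Lemma size_it1_pos m a : 0 < size (it m [:: a]).
Proof. rewrite size_it1; have := BB_pos m; have := BB_le_AA m; case: (a == 0); lia. Qed.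

Lemma size_it1_ge m a : BB m <= size (it m [:: a]).
Proof. rewrite size_it1; have := BB_le_AA m; case: (a == 0); lia. Qed.

Lemma sm_lt m j : sm m j < sm m j.+1.
Proof. rewrite smS; have := size_it1_pos m (f j); lia. Qed.

Lemma decomp m n : exists j t, n = sm m j + t /\ t < size (it m [:: f j]).
Proof.
elim: n => [|n [j [t [E Ht]]]].
  by exists 0, 0; rewrite sm0; split => //; apply: size_it1_pos.
case: (ltnP t.+1 (size (it m [:: f j]))) => H.
  by exists j, t.+1; split => //; lia.
exists j.+1, 0; rewrite smS; split; last by apply: size_it1_pos.
lia.
Qed.

Lemma cnt0E j t : count (pred1 0) (mkseq (fun i => f (j + i)) t) = cnt0 j t.
Proof.
rewrite /cnt0 /mkseq count_map.
have -> : iota j t = [seq j + i | i <- iota 0 t] by rewrite -iotaDl addn0.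
by rewrite count_map.
Qed.

Lemma BFc m j t : sm m (j + t) = sm m j + cnt0 j t * AA m + (t - cnt0 j t) * BB m.
Proof. by rewrite BF size_it cnt0E size_mkseq addnA. Qed.

Lemma cnt0_le j t : cnt0 j t <= t.
Proof. by rewrite /cnt0 -{2}(size_iota j t) count_size. Qed.

Lemma cnt0_mono j t : cnt0 j t <= cnt0 j t.+1.
Proof. by rewrite /cnt0 -addn1 iotaD count_cat; lia. Qed.

Lemma BL1 m j t : t < size (it m [:: f j]) -> f (sm m j + t) = nth 0 (it m [:: f j]) t.
Proof. move=> H; have := @BL m j 1 t. rewrite /mkseq /= addn0; by apply. Qed.
Arguments BL1 {m j t}.

Lemma Zc n : f n = 0 <-> exists i, n = sm 1 i.
Proof.
split.
  move=> Hn. have [i [t [E Ht]]] := decomp 1 n. exists i.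
  case: t E Ht => [|t] E Ht; first by rewrite E addn0.
  have := BL1 Ht. rewrite -E Hn.
  by case: (f01 i) Ht => ->; case: t {E} => [|t] //=.
move=> [i ->]. rewrite -(addn0 (sm 1 i)) BL1; last by apply: size_it1_pos.
by case: (f01 i) => ->.
Qed.

Lemma Oc n : f n <> 0 <-> exists i, n = (sm 2 i).+1.
Proof.
split.
  move=> Hn. have [i [t [E Ht]]] := decomp 2 n. exists i.
  have H := BL1 Ht. rewrite -E in H.
  case: (f01 i) Ht H => -> Ht H;
  (case: t E Ht H => [|[|[|t]]] E Ht H; [ by exfalso; apply: Hn; rewrite H
                                         | by rewrite E addn1
                                         | by exfalso; apply: Hn; rewrite H
                                         | by [] ]).
move=> [i ->]. rewrite -addn1 BL1; last first.
  by rewrite size_it1; have := BB_pos 1; case: (f i == 0).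
by case: (f01 i) => ->.
Qed.

Lemma No11 j : f j <> 0 -> f j.+1 = 0.
Proof.
move=> /Oc [i ->]. case: (f01 i) => Hi.
  have -> : (sm 2 i).+2 = sm 2 i + 2 by lia.
  by rewrite BL1 Hi.
have -> : (sm 2 i).+2 = sm 2 i.+1 + 0.
  rewrite smS Hi. have -> : size (it 2 [:: 1]) = 2 by []. lia.
rewrite BL1; last by apply: size_it1_pos.
by case: (f01 i.+1) => ->.
Qed.

Lemma smC m m' i : sm m (sm m' i) = sm (m + m') i.
Proof. by rewrite {1}/sm PL itD. Qed.

Lemma XY m : exists z,
  (it m [:: 0; 1] = z ++ [:: 0; 1] /\ it m [:: 1; 0] = z ++ [:: 1; 0]) \/
  (it m [:: 0; 1] = z ++ [:: 1; 0] /\ it m [:: 1; 0] = z ++ [:: 0; 1]).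
Proof.
elim: m => [|m [z [[E1 E2]|[E1 E2]]]]; first by exists [::]; left.
  exists (fib_morph z ++ [:: 0]); right.
  by rewrite !itSo E1 E2 !morph_cat -!catA.
exists (fib_morph z ++ [:: 0]); left.
by rewrite !itSo E1 E2 !morph_cat -!catA.
Qed.

Lemma size_it01 m : size (it m [:: 0; 1]) = AA m + BB m.
Proof. by rewrite -cat1s it_cat size_cat. Qed.
Lemma size_it10 m : size (it m [:: 1; 0]) = AA m + BB m.
Proof. by rewrite -cat1s it_cat size_cat addnC. Qed.

Lemma PX m i : i.+1 < BB m -> nth 0 (it m [:: 0]) i = nth 0 (it m [:: 1]) i.
Proof.
case: m => [//|m] Hi.
rewrite itS [in RHS]itS /fib_morph /= -/(fib_morph _).
rewrite -cat1s it_cat nth_cat.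
have -> : size (it m [:: 0]) = BB m.+1 by rewrite BBS.
by rewrite (ltnW Hi).
Qed.

Definition W0 m t := nth 0 (it m [:: 0; 1]) t.
Definition W1 m t := nth 0 (it m [:: 1; 0]) t.

Lemma WL m j t : t < AA m + BB m - 1 ->
  f (sm m j + t) = if f j == 0 then W0 m t else W1 m t.
Proof.
move=> Ht. have HA := AA_pos m. have HB := BB_pos m.
have Hb : mkseq (fun i => f (j + i)) 2 = [:: f j; f j.+1].
  by rewrite /mkseq /= addn0 addn1.
case: (f01 j) => Hj.
- rewrite Hj /=. rewrite (@BL m j 2 t); last first.
    rewrite Hb Hj -cat1s it_cat size_cat size_it1 /=.
    have := size_it1_ge m (f j.+1); lia.
  rewrite Hb Hj /W0 (_ : [:: 0; f j.+1] = [:: 0] ++ [:: f j.+1]) //.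
  rewrite (_ : [:: 0; 1] = [:: 0] ++ [:: 1]) // !it_cat !nth_cat -/(AA m).
  case: ifP => // H1.
  case: (f01 j.+1) => -> //. rewrite PX //. lia.
- rewrite Hj /=. have Hj1 : f j.+1 = 0 by apply: No11; rewrite Hj.
  rewrite (@BL m j 2 t); last by rewrite Hb Hj Hj1 size_it10; lia.
  by rewrite Hb Hj Hj1.
Qed.

Definition TT m := AA m + BB m - 2.

Lemma KL1 m j t : t < TT m -> f (sm m j + t) = f t.
Proof.
move=> Ht. have HA := AA_pos m. have HB := BB_pos m.
have H0 := @WL m 0 t. rewrite sm0 add0n f0 /= in H0.
rewrite WL; last by rewrite /TT in Ht; lia.
rewrite H0; last by rewrite /TT in Ht; lia.
case: (f j == 0) => //.
have [z Hz] := XY m.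
have Hs : size z = TT m.
  case: Hz => [[E _]|[E _]]; have := size_it01 m; rewrite E size_cat /= /TT; lia.
rewrite /W0 /W1.
by case: Hz => [[-> ->]|[-> ->]]; rewrite !nth_cat Hs Ht.
Qed.

Lemma KL2 m : exists a b, a <> b /\ forall j,
  f (sm m j + TT m) = if f j == 0 then a else b.
Proof.
have HA := AA_pos m. have HB := BB_pos m.
have [z Hz] := XY m.
have Hs : size z = TT m.
  case: Hz => [[E _]|[E _]]; have := size_it01 m; rewrite E size_cat /= /TT; lia.
have Hw : forall j, f (sm m j + TT m) = if f j == 0 then W0 m (TT m) else W1 m (TT m).
  by move=> j; rewrite WL // /TT; lia.
exists (W0 m (TT m)), (W1 m (TT m)); split => //.
rewrite /W0 /W1.
by case: Hz => [[-> ->]|[-> ->]]; rewrite !nth_cat Hs ltnn subnn.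
Qed.

Definition Pw (w : seq nat) p := mkseq (fun t => f (p + t)) (size w) == w.

Lemma Pw_rcons w c p : Pw (rcons w c) p = Pw w p && (f (p + size w) == c).
Proof. by rewrite /Pw size_rcons mkseqS eqseq_rcons. Qed.

Definition Inv w m p0 := p0 < BB m /\ p0 + size w <= TT m /\
  forall p, Pw w p <-> exists j, p = p0 + sm m j.

Lemma ST w : (forall p, Pw w p = false) \/ exists m p0, Inv w m p0.
Proof.
elim/last_ind: w => [|w c [IH|[m [p0 [H1 [H2 H3]]]]]].
- right; exists 0, 0; split => //; split => // p; split => // _.
  by exists p; rewrite /sm /it /= size_mkseq.
- by left => p; rewrite Pw_rcons IH.
have HA := AA_pos m. have HB := BB_pos m. have HAB := BB_le_AA m.
have key : forall p, Pw (rcons w c) p <->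
    exists j, p = p0 + sm m j /\ f (sm m j + (p0 + size w)) = c.
  move=> p; rewrite Pw_rcons; split.
    move/andP => [/H3 [j Ej] /eqP Hc]; exists j; split => //.
    by rewrite -Hc Ej; congr f; lia.
  move=> [j [Ej Hc]]; apply/andP; split; first by apply/H3; exists j.
  by apply/eqP; rewrite -Hc Ej; congr f; lia.
case: (ltnP (p0 + size w) (TT m)) => Hlt.
  case: (eqVneq (f (p0 + size w)) c) => Hc.
  - right; exists m, p0; split => //; split; first by rewrite size_rcons; lia.
    move=> p; rewrite key; split.
      by move=> [j [Ej _]]; exists j.
    by move=> [j Ej]; exists j; split => //; rewrite KL1.
  - left => p; apply/negP => /key [j [_ Hj]].
    by move: Hc; rewrite -Hj KL1 // eqxx.
have Heq : p0 + size w = TT m by lia.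
have [a [b [Hab Hf]]] := KL2 m.
rewrite Heq in key.
case: (eqVneq c a) => Hca.
  right; exists m.+1, p0; split; first by rewrite BBS; lia.
  split; first by rewrite size_rcons /TT AAS BBS; rewrite /TT in Heq; lia.
  move=> p; rewrite key; split.
    move=> [j [Ej Hj]]. rewrite Hf Hca in Hj.
    case: eqP Hj => [/Zc [i Ei] _|_ Hj]; last by exfalso; apply: Hab.
    by exists i; rewrite Ej Ei smC addn1.
  move=> [i ->]; exists (sm 1 i); split; first by rewrite smC addn1.
  rewrite Hf Hca; suff -> : f (sm 1 i) == 0 by [].
  by apply/eqP/Zc; exists i.
case: (eqVneq c b) => Hcb.
  right; exists m.+2, (p0 + AA m); split; first by rewrite !BBS AAS; lia.
  split; first by rewrite size_rcons /TT ?AAS ?BBS ?AAS ?BBS; rewrite /TT in Heq; lia.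
  move=> p; rewrite key; split.
    move=> [j [Ej Hj]]. rewrite Hf Hcb in Hj.
    case: eqP Hj => [_ Hj|/Oc [i Ei] _]; first by exfalso; apply: Hab.
    exists i; rewrite Ej Ei smS smC addn2.
    have -> : f (sm 2 i) = 0 by apply/Zc; exists (sm 1 i); rewrite smC.
    by rewrite size_it1 eqxx; lia.
  move=> [i ->]; exists (sm 2 i).+1; split.
    rewrite smS smC addn2.
    have -> : f (sm 2 i) = 0 by apply/Zc; exists (sm 1 i); rewrite smC.
    by rewrite size_it1 eqxx; lia.
  rewrite Hf Hcb; suff -> : (f (sm 2 i).+1 == 0) = false by [].
  by apply/eqP/Oc; exists i.
left => p; apply/negP => /key [j [_ Hj]].
move: Hj; rewrite Hf; case: (f j == 0) => Hj.
  by move: Hca; rewrite Hj eqxx.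
by move: Hcb; rewrite Hj eqxx.
Qed.

Definition ix (y : nat -> nat) b := count (fun j => y j < b) (iota 0 b).

Lemma down_count (Q : pred nat) b :
  (forall j, Q j.+1 -> Q j) -> (forall j, Q j -> j < b) ->
  forall j, Q j = (j < count Q (iota 0 b)).
Proof.
elim: b Q => [|b IH] Q Hd Hb j.
  by apply/negbTE/negP => /Hb.
rewrite -[b.+1]addn1 iotaD count_cat add0n /= addn0.
case: (boolP (Q b)) => Qb.
  have Hall : forall i, i <= b -> Q i.
    move=> i Hi; have -> : i = b - (b - i) by lia.
    elim: (b - i) => [|d IHd]; first by rewrite subn0.
    case: (ltnP d b) => Hdb.
      by apply: Hd; have -> : (b - d.+1).+1 = b - d by lia.
    by have -> : b - d.+1 = b - d by lia.
  have -> : count Q (iota 0 b) = b.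
    rewrite -[in RHS](size_iota 0 b); apply/eqP; rewrite -all_count.
    by apply/allP => i; rewrite mem_iota => /andP [_ Hi]; apply: Hall; lia.
  apply/idP/idP => [/Hb|]; first lia.
  by move=> Hj; apply: Hall; lia.
rewrite addn0; apply: IH => // i Hi.
have := Hb _ Hi; rewrite ltnS leq_eqVlt => /orP [/eqP E|//].
by move: Qb; rewrite -E Hi.
Qed.

Lemma incr_le (y : nat -> nat) : (forall j, y j < y j.+1) ->
  forall i d, y i + d <= y (i + d).
Proof.
move=> Hy i; elim => [|d IH]; first by rewrite !addn0.
have := Hy (i + d); rewrite !addnS; lia.
Qed.
Arguments incr_le {y}.

Lemma incr_mono (y : nat -> nat) : (forall j, y j < y j.+1) ->
  forall i j, i <= j -> y i <= y j.
Proof.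
move=> Hy i j Hij; have := incr_le Hy i (j - i); rewrite subnKC //; lia.
Qed.
Arguments incr_mono {y} Hy {i j}.

Lemma incr_lt (y : nat -> nat) : (forall j, y j < y j.+1) ->
  forall i j, i < j -> y i < y j.
Proof.
move=> Hy i j Hij; have := incr_mono Hy Hij; have := Hy i; lia.
Qed.
Arguments incr_lt {y} Hy {i j}.

Lemma ixP (y : nat -> nat) : (forall j, y j < y j.+1) ->
  forall b j, (y j < b) = (j < ix y b).
Proof.
move=> Hy b; apply: down_count.
  by move=> j; have := Hy j; lia.
move=> j Hj; have := incr_le Hy 0 j; rewrite add0n; lia.
Qed.
Arguments ixP {y}.

Lemma lt_ext x z : (forall j, (j < x) = (j < z)) -> x = z.
Proof.
move=> H. case: (ltngtP x z) => // Hxz.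
- by move: (H x); rewrite ltnn Hxz.
- by move: (H z); rewrite ltnn Hxz.
Qed.

Lemma ix_eq (y : nat -> nat) b t : (forall j, y j < y j.+1) ->
  (forall j, (y j < b) = (j < t)) -> ix y b = t.
Proof. move=> Hy H; apply: lt_ext => j; by rewrite -(ixP Hy) H. Qed.

Lemma bridge (y : nat -> nat) (P : pred nat) : (forall j, y j < y j.+1) ->
  (forall p, P p <-> exists j, p = y j) ->
  forall a L, count P (iota a L) = ix y (a + L) - ix y a.
Proof.
move=> Hy HP a; elim => [|L IH]; first by rewrite addn0 subnn.
rewrite -[L.+1]addn1 iotaD count_cat IH /= addn0 addnA.
set b := a + L. set t := ix y b.
have Hmono : ix y a <= t.
  rewrite leqNgt -(ixP Hy); apply/negP => Hya.
  have := ixP Hy b t; rewrite ltnn.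
  have -> : y t < b by rewrite /b; lia.
  by [].
have Hyt : b <= y t by rewrite leqNgt (ixP Hy) ltnn.
have Hlt : forall j, j < t -> y j < b by move=> j; rewrite (ixP Hy).
case: (eqVneq (y t) b) => Hyb.
  have -> : P b by apply/HP; exists t.
  have -> : ix y (b + 1) = t.+1.
    apply: ix_eq => // j; rewrite addn1 ltnS.
    case: (leqP j t) => Hj.
      by have := incr_mono Hy Hj; rewrite Hyb => ->.
    have := incr_lt Hy Hj; rewrite Hyb => H.
    by rewrite ltnS (leqNgt (y j)) (leqNgt j) Hj H.
  rewrite /= -/t. lia.
have -> : P b = false.
  apply/negP => /HP [j Ej].
  case: (ltnP j t) => Hj; first by have := Hlt _ Hj; rewrite -Ej ltnn.
  have := incr_mono Hy Hj; rewrite -Ej; lia.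
have -> : ix y (b + 1) = t.
  apply: ix_eq => // j; rewrite addn1 ltnS leq_eqVlt (ixP Hy).
  case: (eqVneq (y j) b) => //= E.
  case: (ltnP j t) => Hj; first by have := Hlt _ Hj; rewrite E ltnn.
  case: (eqVneq j t) => [Ejt|Hne]; first by move: Hyb; rewrite -Ejt E eqxx.
  have : t < j by lia.
  move/(incr_lt Hy); lia.
by rewrite /= addn0.
Qed.

Lemma ix_mono (y : nat -> nat) : (forall j, y j < y j.+1) ->
  forall a b, a <= b -> ix y a <= ix y b.
Proof.
move=> Hy a b Hab. rewrite leqNgt -(ixP Hy); apply/negP => Hya.
have := ixP Hy b (ix y b); rewrite ltnn.
have -> : y (ix y b) < b by lia.
by [].
Qed.

Lemma gap (y : nat -> nat) (a0 L D Bd u : nat) :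
  (forall j, y j < y j.+1) -> y 0 < a0 ->
  (forall j, 0 < j -> y j + u * Bd <= y (j + u)) ->
  (forall s r t, 0 < r -> t < L -> y (s + t) - y s <= y (r + t) - y r + D) ->
  D <= u * Bd + 1 ->
  forall a a', a0 <= a -> a0 <= a' ->
  ix y (a' + L) - ix y a' < ix y (a + L) - ix y a + 2 + u.
Proof.
move=> Hy H0 Hg H Hd a a' Ha Ha'.
set X := u * Bd in Hg Hd.
set s1 := ix y a. set e1 := ix y (a + L). set r := ix y a'. set e2 := ix y (a' + L).
have Hs1 : 0 < s1 by rewrite /s1 -(ixP Hy); lia.
have Hr : 0 < r by rewrite /r -(ixP Hy); lia.
have Hys1 : y (s1 - 1) < a by rewrite (ixP Hy) -/s1; lia.
have Hye1 : a + L <= y e1 by rewrite leqNgt (ixP Hy) ltnn.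
have Hyr : a' <= y r by rewrite leqNgt (ixP Hy) ltnn.
have He1 : s1 <= e1 by apply: ix_mono => //; lia.
rewrite ltnNge; apply/negP => Hc.
set c := e1 - s1 in Hc.
have He2 : y (e2 - 1) < a' + L by rewrite (ixP Hy) -/e2; lia.
have Hm1 : y (r + c.+1 + u) <= y (e2 - 1) by apply: incr_mono => //; lia.
have Hg1 := Hg (r + c.+1) ltac:(lia).
have Hs := incr_le Hy r c.+1.
have HcL : c.+1 < L by lia.
have := H (s1 - 1) r c.+1 Hr HcL.
have -> : s1 - 1 + c.+1 = e1 by rewrite /c; lia.
lia.
Qed.

Definition y1 j := if j is j'.+1 then (sm 1 j').+1 else 0.
Lemma y1S j : y1 j.+1 = (sm 1 j).+1. Proof. by []. Qed.
Lemma y1_incr j : y1 j < y1 j.+1.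
Proof. case: j => [//|j]; rewrite !y1S; have := sm_lt 1 j; lia. Qed.

Definition P1 p := (p == 0) || (f p.-1 == 0).

Lemma P1E p : P1 p <-> exists j, p = y1 j.
Proof.
case: p => [|p]; first by split => // _; exists 0.
rewrite /P1 /=; split.
  by move/eqP/Zc => [i ->]; exists i.+1.
move=> [[|j] //= [E]]; apply/eqP/Zc; by exists j.
Qed.

Lemma P1cnt i L : count P1 (iota i.+1 L) = cnt0 i L.
Proof.
have -> : iota i.+1 L = [seq 1 + q | q <- iota i L] by rewrite -iotaDl add1n.
rewrite count_map /cnt0; apply: eq_count => p.
by rewrite /preim /P1 /=.
Qed.

Lemma sm1E j t : sm 1 (j + t) = sm 1 j + t + cnt0 j t.
Proof.
rewrite BFc (_ : AA 1 = 2) // (_ : BB 1 = 1) //; have := cnt0_le j t; lia.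
Qed.

Lemma Bal L : forall i i', cnt0 i' L <= cnt0 i L + 1.
Proof.
elim/ltn_ind: L => L IH i i'.
have Hg : forall j, 0 < j -> y1 j + 0 * 0 <= y1 (j + 0) by move=> j _; rewrite !addn0.
have HH : forall s r t, 0 < r -> t < L -> y1 (s + t) - y1 s <= y1 (r + t) - y1 r + 1.
  move=> s [|r] t // _ HtL.
  rewrite addSn y1S y1S sm1E.
  case: s => [|s].
    case: t HtL => [|t] HtL; first by rewrite /=; lia.
    rewrite add0n y1S.
    have E := sm1E 0 t. rewrite sm0 !add0n in E. rewrite E /=.
    have := IH t (ltnW HtL) r 0. have := cnt0_mono r t. lia.
  rewrite addSn y1S y1S sm1E.
  have := IH t HtL r s. lia.
have := @gap y1 1 L 1 0 0 y1_incr erefl Hg HH erefl i.+1 i'.+1 erefl erefl.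
rewrite -!(bridge _ _ y1_incr P1E) !P1cnt.
lia.
Qed.

Lemma occE w i n : occ w (factor f i n) = count (Pw w) (iota i (n.+1 - size w)).
Proof.
rewrite /occ /factor size_mkseq.
set k := size w. set L := n.+1 - k.
have -> : iota 0 n.+1 = iota 0 L ++ iota (0 + L) (n.+1 - L) by rewrite -iotaD; congr iota; lia.
rewrite count_cat add0n.
have -> : count (fun p => take k (drop p (mkseq (fun j => f (i + j)) n)) == w)
    (iota L (n.+1 - L)) = 0.
  rewrite (@eq_in_count _ _ pred0) ?count_pred0 // => p.
  rewrite mem_iota => /andP [Hp Hp2] /=.
  apply/negP => /eqP E. have := congr1 size E.
  rewrite size_take size_drop size_mkseq -/k.
  case: ifP; rewrite /L in Hp Hp2; lia.
have -> : iota i L = [seq i + q | q <- iota 0 L] by rewrite -iotaDl addn0.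
rewrite count_map addn0. apply: eq_in_count => p; rewrite mem_iota => /andP [_ Hp].
rewrite /preim /Pw -/k /=. congr (_ == w).
apply: (@eq_from_nth _ 0).
  rewrite size_take size_drop !size_mkseq. case: ifP; rewrite /L in Hp; lia.
move=> t; rewrite size_take size_drop size_mkseq => Ht.
have Htk : t < k by move: Ht; case: ifP; rewrite /L in Hp; lia.
rewrite nth_take // nth_drop !nth_mkseq //; last by rewrite /L in Hp; lia.
by rewrite addnA.
Qed.

Lemma smE m j t : sm m (j + t) = sm m j + t * BB m + cnt0 j t * (AA m - BB m).
Proof.
rewrite BFc. have := cnt0_le j t. have := BB_le_AA m.
move: (cnt0 j t) (AA m) (BB m) => c A B H1 H2.
have h1 : c * B <= c * A by apply: leq_mul.
have h2 : c * B <= t * B by apply: leq_mul.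
rewrite mulnBl mulnBr. lia.
Qed.

Lemma part1 k : balanced f k 2.
Proof.
move=> i j n w Hw _. rewrite !occE.
case: (ST w) => [Hemp | [m [p0 [H1 [H2 H3]]]]].
  by rewrite !(@eq_count _ (Pw w) pred0 Hemp) !count_pred0.
set L := n.+1 - size w.
set A := AA m. set B := BB m.
have HA := AA_pos m. have HB := BB_pos m. have HAB := BB_le_AA m. have HA2 := AA_le m.
pose y j := if j is j'.+1 then B + p0 + sm m j' else p0.
pose P' p := (p == p0) || ((B <= p) && Pw w (p - B)).
have Hy : forall j, y j < y j.+1.
  case => [|j0] /=; first by rewrite sm0; lia.
  have := sm_lt m j0; lia.
have HP : forall p, P' p <-> exists j, p = y j.
  move=> p; rewrite /P'; split.
    case/orP => [/eqP ->|/andP [Hp /H3 [j0 Ej]]]; first by exists 0.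
    by exists j0.+1 => /=; lia.
  move=> [[|j'] ->]; first by rewrite eqxx.
  apply/orP; right; apply/andP; split; first by rewrite /=; lia.
  by apply/H3; exists j'; rewrite /=; lia.
have Hc : forall i, count P' (iota (i + B) L) = count (Pw w) (iota i L).
  move=> i0. have -> : iota (i0 + B) L = [seq B + q | q <- iota i0 L].
    by rewrite -iotaDl addnC.
  rewrite count_map; apply: eq_count => p; rewrite /preim /P' /=.
  have -> : (B + p == p0) = false by apply/negbTE; rewrite neq_ltn; apply/orP; right; lia.
  by rewrite leq_addr /= addKn.
have Hg : forall j, 0 < j -> y j + 1 * B <= y (j + 1).
  case => [//|j0] _; rewrite addn1 /= smS; have := size_it1_ge m (f j0); lia.
have HH : forall s r t, 0 < r -> t < L -> y (s + t) - y s <= y (r + t) - y r + (A - B).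
  move=> s [|r] t // _ HtL.
  rewrite addSn /= !smE -/A -/B.
  case: s => [|s].
    case: t HtL => [|t] HtL; first by rewrite /=; lia.
    rewrite add0n /=.
    have E := smE m 0 t. rewrite sm0 !add0n -/A -/B in E. rewrite E.
    have := Bal t r 0. have := cnt0_mono r t.
    move=> Hm Hb.
    have : cnt0 0 t * (A - B) <= (cnt0 r t.+1 + 1) * (A - B) by apply: leq_mul => //; lia.
    rewrite mulnDl mul1n. nia.
  rewrite addSn /= !smE -/A -/B.
  have := Bal t r s => Hb.
  have : cnt0 s t * (A - B) <= (cnt0 r t + 1) * (A - B) by apply: leq_mul => //; lia.
  rewrite mulnDl mul1n. nia.
have Hd : A - B <= 1 * B + 1 by lia.
have G := @gap y B L (A - B) B 1 Hy H1 Hg HH Hd.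
have G1 := G (i + B) (j + B) (leq_addl _ _) (leq_addl _ _).
have G2 := G (j + B) (i + B) (leq_addl _ _) (leq_addl _ _).
rewrite -!(bridge _ _ Hy HP) !Hc in G1 G2.
lia.
Qed.

Lemma AB_gap m : 3 <= m -> BB m + 2 <= AA m.
Proof.
case: m => [|[|[|m]]] // _.
rewrite ?AAS ?BBS ?AAS ?BBS ?AAS ?BBS; have := AA_pos m; have := BB_pos m; lia.
Qed.

Lemma part2 k C : 2 <= k -> balanced f k C -> 2 <= C.
Proof.
move=> Hk Hb.
case: k Hk Hb => [|[|[|[|k]]]] // _ Hb.
- have := Hb 3 7 5 [:: 0; 0] erefl erefl.
  have -> : occ [:: 0; 0] (factor f 3 5) = 0 by vm_compute.
  have -> : occ [:: 0; 0] (factor f 7 5) = 2 by vm_compute.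
  by [].
- have := Hb 2 6 6 [:: 1; 0; 0] erefl erefl.
  have -> : occ [:: 1; 0; 0] (factor f 2 6) = 0 by vm_compute.
  have -> : occ [:: 1; 0; 0] (factor f 6 6) = 2 by vm_compute.
  by [].
set K := k.+4.
set w := mkseq f K.
have Hw : size w = K by rewrite size_mkseq.
have Hall : all (fun a => a < 2) w.
  by apply/allP => x /mapP [t _ ->]; apply: f_lt2.
have Hw0 : Pw w 0.
  by rewrite /Pw Hw; apply/eqP; apply: eq_mkseq => t; rewrite add0n.
case: (ST w) => [Hemp | [m [p0 [H1 [H2 H3]]]]].
  by move: Hw0; rewrite Hemp.
have Hp0 : p0 = 0.
  by have [j Ej] := (proj1 (H3 0)) Hw0; lia.
rewrite Hp0 add0n Hw in H2.
have Hm : 3 <= m.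
  case: m H1 H2 H3 => [|[|[|m]]] //= _ H2 _; move: H2; rewrite /TT /AA /BB /=; lia.
set A := AA m. set B := BB m.
have HAB := AB_gap _ Hm. have HA := AA_pos m. have HB := BB_pos m.
have f0' : f 0 = 0 by vm_compute.
have f1' : f 1 = 1 by vm_compute.
have f2' : f 2 = 0 by vm_compute.
have f3' : f 3 = 0 by vm_compute.
have s1 : sm m 1 = A by rewrite smS sm0 f0' size_it1.
have s2 : sm m 2 = A + B by rewrite smS s1 f1' size_it1.
have s3 : sm m 3 = 2 * A + B by rewrite smS s2 f2' size_it1 /= -/A; lia.
have s4 : sm m 4 = 3 * A + B by rewrite smS s3 f3' size_it1 /= -/A; lia.
have Hy : forall j, sm m j < sm m j.+1 by move=> j; apply: sm_lt.
have HP : forall p, Pw w p <-> exists j, p = sm m j.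
  by move=> p; rewrite H3 Hp0.
set L := A + B + 1.
have I0 : ix (sm m) 0 = 0 by [].
have I1 : ix (sm m) L = 3.
  apply: ix_eq => // j. case: (ltnP j 3) => Hj.
    have Hj2 : j <= 2 by lia.
    have := incr_mono Hy Hj2; rewrite s2 => H.
    by change (sm m j < L); rewrite /L; lia.
  have := incr_mono Hy Hj; rewrite s3 => H.
  by apply/negbTE; rewrite -leqNgt /L; lia.
have I2 : ix (sm m) (L + L) = 4.
  apply: ix_eq => // j. case: (ltnP j 4) => Hj.
    have Hj2 : j <= 3 by lia.
    have := incr_mono Hy Hj2; rewrite s3 => H.
    by change (sm m j < L + L); rewrite /L; lia.
  have := incr_mono Hy Hj; rewrite s4 => H.
  by apply/negbTE; rewrite -leqNgt /L; lia.
have := Hb 0 L (L + K - 1) w Hw Hall.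
rewrite !occE Hw (_ : (L + K - 1).+1 - K = L); last by rewrite /L; lia.
rewrite !(bridge _ _ Hy HP) add0n I0 I1 I2.
by [].
Qed.

Theorem theorem14 : forall k : nat, (2 <= k)%N ->
  balanced fib_word k 2 /\
  (forall C : nat, (1 <= C)%N -> balanced fib_word k C -> (2 <= C)%N).
Proof.
move=> k Hk; split; first by apply: part1.
by move=> C _; apply: part2.
Qed.
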